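(* Let $k$ be a commutative associative unital ring, let $R\in k\text{-alg}$, let $\alpha\colon R\to S$ be a morphism in $k\text{-alg}$ making $S$ a faithfully flat $R$-algebra, and let $A$ and $B$ be $R$-algebras such that $B$ is an $S/R$-form of $A$ determined by the cocycle $u=\theta_2^{-1}\circ\theta_1\in \mathrm{Aut}_{S''}(A\otimes_R S'')$ associated to some $S$-algebra isomorphism $\theta\colon A\otimes_R S\to B\otimes_R S$. Let $F\colon k\text{-ALG}\to k\text{-MOD}$ be a functor over $k\text{-alg}$ which is stable under base change. Then $F_R(B)$ is an $S/R$-form of the $R$-module $F_R(A)$ (i.e. $F_R(A)\otimes_R S\cong F_R(B)\otimes_R S$ as $S$-modules), and $F_R(B)$ is isomorphic as an $R$-module to the $R$-module $L_z$ determined by the cocycle \[ z=\nu_{A,\alpha_2\circ\alpha}^{-1}\circ F(u)\circ \nu_{A,\alpha_1\circ\alpha}\in \mathrm{Aut}_{S''}\big(F_R(A)\otimes_R S''\big). \]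
   Context: $k$ is a commutative associative unital ring; $k\text{-alg}$ is the category of commutative associative unital $k$-algebras with unital algebra homomorphisms. For a commutative ring $R$, an $R$-algebra is an $R$-module $A$ with an $R$-bilinear product $A\times A\to A$ (no identities such as associativity or unit are assumed). For a morphism $\alpha\colon R\to S$ in $k\text{-alg}$, an $R$-module (resp. $R$-algebra) $M$ and an $S$-module (resp. algebra) $N$, a map $f\colon M\to N$ is $\alpha$-semilinear if it is additive with $f(rm)=\alpha(r)f(m)$ (and multiplicative in the algebra case). The category $k\text{-ALG}$ has objects pairs $(R,A)$ with $R\in k\text{-alg}$ and $A$ an $R$-algebra, and morphisms $(\alpha,f)\colon(R,A)\to(S,B)$ with $\alpha\colon R\to S$ in $k\text{-alg}$ and $f\colon A\to B$ an $\alpha$-semilinear algebra homomorphism; $k\text{-MOD}$ is defined in the same way with modules and module homomorphisms. For $\alpha\colon R\to S$ and an $R$-algebra $A$, write $A\otimes_\alpha S$ (or $A\otimes_R S$) for the base-changed $S$-algebra and $\alpha^A\colon A\to A\otimes_\alpha S$, $a\mapsto a\otimes 1$. A functor $F\colon k\text{-ALG}\to k\text{-MOD}$ is over $k\text{-alg}$ if $F(R,A)=(R,F_R(A))$ for an $R$-module $F_R(A)$ and $F(\alpha,f)=(\alpha,F_\alpha(f))$ for an $\alpha$-semilinear map $F_\alpha(f)$; when $\alpha$ is an identity we write $F(f)$ for $F_\alpha(f)$. For such $F$, $\alpha\colon R\to T$ and an $R$-algebra $A$ define the $T$-linear map $\nu_{A,\alpha}\colon F_R(A)\otimes_\alpha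 T\to F_T(A\otimes_\alpha T)$, $m\otimes t\mapsto t\,F_\alpha(\alpha^A)(m)$. $F$ is stable under base change if every $\nu_{A,\alpha}$ is an isomorphism. Descent notation: $S''=S\otimes_R S$, $\alpha_1,\alpha_2\colon S\to S''$, $\alpha_1(s)=s\otimes 1$, $\alpha_2(s)=1\otimes s$; $S''$ is an $R$-algebra via $\alpha_1\circ\alpha=\alpha_2\circ\alpha$. Given an $S$-algebra isomorphism $\theta\colon A\otimes_R S\to B\otimes_R S$, for $i=1,2$ let $\theta_i\colon A\otimes_R S''\to B\otimes_R S''$ be the $S''$-algebra isomorphism corresponding to $\theta\otimes_{\alpha_i}\mathrm{Id}_{S''}$ under the identifications $(X\otimes_R S)\otimes_{\alpha_i}S''\cong X\otimes_R S''$, $(x\otimes s)\otimes y\mapsto x\otimes \alpha_i(s)y$ ($X=A,B$). For an $R$-module $M$ and $z\in\mathrm{Aut}_{S''}(M\otimes_R S'')$, the $R$-module determined by $z$ is $L_z=\{x\in M\otimes_R S: z((\mathrm{Id}_M\otimes\alpha_1)(x))=(\mathrm{Id}_M\otimes\alpha_2)(x)\}$, where $\mathrm{Id}_M\otimes\alpha_i\colon M\otimes_R S\to M\otimes_R S''$, $m\otimes s\mapsto m\otimes\alpha_i(s)$. Here $F(u)=F_{\mathrm{Id}_{S''}}(u)$. *)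

(* Defs.v *)
(* Tensor products / base change are not in the library, so
   every base change is given by its universal property. *)
From mathcomp Require Import all_boot all_algebra.
Set Implicit Arguments. Unset Strict Implicit. Unset Printing Implicit Defensive.
Import GRing.Theory.
Local Open Scope ring_scope.

Definition rhom (R S : comPzRingType) (f : R -> S) : Prop :=
  [/\ forall x y, f (x + y) = f x + f y,
      forall x y, f (x * y) = f x * f y & f 1 = 1].

Record kalg (k : comPzRingType) := KAlg {
  kcar :> comPzRingType;
  kstr : k -> kcar;
  kstr_rhom : rhom kstr }.

Record kmor (k : comPzRingType) (R S : kalg k) := KMor {
  kfun :> R -> S;
  kfun_rhom : rhom kfun;
  kfun_k : forall c, kfun (kstr R c) = kstr S c }.

Lemma kid_rhom (k : comPzRingType) (R : kalg k) : rhom (fun x : R => x).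
Proof. by split. Qed.
Definition kid (k : comPzRingType) (R : kalg k) : kmor R R :=
  @KMor k R R (fun x => x) (kid_rhom R) (fun c => erefl).

Lemma kcomp_rhom (k : comPzRingType) (R S T : kalg k) (a : kmor R S) (b : kmor S T) :
  rhom (fun x => b (a x)).
Proof.
case: (kfun_rhom a) => a1 a2 a3; case: (kfun_rhom b) => b1 b2 b3.
by split => [x y|x y|]; rewrite ?a1 ?b1 ?a2 ?b2 ?a3 ?b3.
Qed.
Lemma kcomp_k (k : comPzRingType) (R S T : kalg k) (a : kmor R S) (b : kmor S T) c :
  b (a (kstr R c)) = kstr T c.
Proof. by rewrite !kfun_k. Qed.
Definition kcomp (k : comPzRingType) (R S T : kalg k) (a : kmor R S) (b : kmor S T)
  : kmor R T := @KMor k R T (fun x => b (a x)) (kcomp_rhom a b) (kcomp_k a b).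

Definition slinear (R S : comPzRingType) (a : R -> S) (M : lmodType R) (N : lmodType S)
  (f : M -> N) : Prop :=
  (forall x y, f (x + y) = f x + f y) /\ (forall r x, f (r *: x) = a r *: f x).

(* R-algebras: R-modules with an R-bilinear product (no further identities) *)
Record ralg (R : comPzRingType) := RAlg {
  ralg_mod :> lmodType R;
  amul : ralg_mod -> ralg_mod -> ralg_mod;
  amulDl : forall (r : R) x y z, amul (r *: x + y) z = r *: amul x z + amul y z;
  amulDr : forall (r : R) x y z, amul z (r *: x + y) = r *: amul z x + amul z y }.

(* alpha-semilinear algebra homomorphisms: the morphisms (alpha, f) of k-ALG *)
Record ahom (k : comPzRingType) (R S : kalg k) (a : kmor R S) (A : ralg R) (B : ralg S) :=
  AHom {
  afun :> A -> B;
  afun_slin : slinear a afun;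
  afun_mul : forall x y, afun (amul x y) = amul (afun x) (afun y) }.

(* A functor F : k-ALG -> k-MOD over k-alg:  F(R,A) = (R, FO R A),
   F(alpha,f) = (alpha, FM f) with FM f alpha-semilinear, functorial. *)
Record kfunctor (k : comPzRingType) := KFunctor {
  FO : forall R : kalg k, ralg R -> lmodType R;
  FM : forall (R S : kalg k) (a : kmor R S) (A : ralg R) (B : ralg S),
         ahom a A B -> FO A -> FO B;
  FM_slin : forall R S (a : kmor R S) A B (f : ahom a A B), slinear a (FM f);
  FM_id : forall (R : kalg k) (a : kmor R R) (A : ralg R) (f : ahom a A A),
      (forall r, a r = r) -> (forall x, f x = x) -> forall m, FM f m = m;
  FM_comp : forall (R S T : kalg k) (a : kmor R S) (b : kmor S T) (c : kmor R T)
      (A : ralg R) (B : ralg S) (C : ralg T)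
      (f : ahom a A B) (g : ahom b B C) (h : ahom c A C),
      (forall r, c r = b (a r)) -> (forall x, h x = g (f x)) ->
      forall m, FM h m = FM g (FM f m) }.
Arguments FM [k] F [R S a A B] _ _ : rename.

(* (X, j) is the base change M (x)_a T of the R-module M along a : R -> T,
   with j m = m (x) 1; characterized by its universal property. *)
Definition mod_bc (k : comPzRingType) (R T : kalg k) (a : kmor R T)
  (M : lmodType R) (X : lmodType T) (j : M -> X) : Prop :=
  slinear a j /\
  forall (Y : lmodType T) (g : M -> Y), slinear a g ->
    exists h : X -> Y, [/\ slinear (kid T) h, (forall m, h (j m) = g m) &
      forall h' : X -> Y, slinear (kid T) h' -> (forall m, h' (j m) = g m) ->
        forall x, h' x = h x].

(* (X, i) is the base-changed algebra A (x)_a T with i = a^A *)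
Definition alg_bc (k : comPzRingType) (R T : kalg k) (a : kmor R T)
  (A : ralg R) (X : ralg T) (i : ahom a A X) : Prop := mod_bc a (afun i).

Definition flat (k : comPzRingType) (R S : kalg k) (a : kmor R S) : Prop :=
  forall (M N : lmodType R) (f : M -> N), slinear (kid R) f -> injective f ->
  forall (MS NS : lmodType S) (jM : M -> MS) (jN : N -> NS),
    mod_bc a jM -> mod_bc a jN ->
  forall g : MS -> NS, slinear (kid S) g -> (forall m, g (jM m) = jN (f m)) ->
    injective g.

Definition faithfully_flat (k : comPzRingType) (R S : kalg k) (a : kmor R S) : Prop :=
  flat a /\
  forall (M : lmodType R) (MS : lmodType S) (jM : M -> MS), mod_bc a jM ->
    (forall x : MS, x = 0) -> forall m : M, m = 0.

(* S2 = S (x)_R S with a1 s = s (x) 1, a2 s = 1 (x) s: pushout in k-alg *)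
Definition ring_tensor (k : comPzRingType) (R S S2 : kalg k) (a : kmor R S)
  (a1 a2 : kmor S S2) : Prop :=
  (forall r, a1 (a r) = a2 (a r)) /\
  forall (C : kalg k) (f1 f2 : kmor S C), (forall r, f1 (a r) = f2 (a r)) ->
    exists h : kmor S2 C, [/\ (forall s, h (a1 s) = f1 s), (forall s, h (a2 s) = f2 s) &
      forall h' : kmor S2 C, (forall s, h' (a1 s) = f1 s) -> (forall s, h' (a2 s) = f2 s) ->
        forall x, h' x = h x].

(* F is stable under base change: every nu_{A,b} is bijective, where
   nu_{A,b} : F_R(A) (x)_b T -> F_T(A (x)_b T) is the T-linear map with
   nu (m (x) 1) = F_b(b^A)(m). *)
Definition stable_bc (k : comPzRingType) (F : kfunctor k) : Prop :=
  forall (R T : kalg k) (b : kmor R T) (A : ralg R) (AT : ralg T) (i : ahom b A AT),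
    alg_bc i ->
  forall (X : lmodType T) (j : FO F A -> X), mod_bc b j ->
  forall nu : X -> FO F AT, slinear (kid T) nu -> (forall m, nu (j m) = FM F i m) ->
    bijective nu.

(* Main.v *)
Require Import Defs.
From HB Require Import structures.
From mathcomp Require Import all_boot all_algebra.
From mathcomp Require Import boolp.
Set Implicit Arguments. Unset Strict Implicit. Unset Printing Implicit Defensive.
Import GRing.Theory.
Local Open Scope ring_scope.

Record qdata (K : pzRingType) := QData {
  qT : Type;
  qr : qT -> qT -> Prop;
  qz : qT; qad : qT -> qT -> qT; qop : qT -> qT; qsc : K -> qT -> qT;
  qrefl : forall x, qr x x;
  qsym : forall x y, qr x y -> qr y x;
  qtrans : forall x y z, qr x y -> qr y z -> qr x z;
  qadC : forall x x' y y', qr x x' -> qr y y' -> qr (qad x y) (qad x' y');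
  qopC : forall x x', qr x x' -> qr (qop x) (qop x');
  qscC : forall a x x', qr x x' -> qr (qsc a x) (qsc a x');
  qaddA : forall x y z, qr (qad x (qad y z)) (qad (qad x y) z);
  qaddC : forall x y, qr (qad x y) (qad y x);
  qadd0 : forall x, qr (qad qz x) x;
  qaddN : forall x, qr (qad (qop x) x) qz;
  qscA : forall a b x, qr (qsc a (qsc b x)) (qsc (a * b) x);
  qsc1 : forall x, qr (qsc 1 x) x;
  qscDr : forall a x y, qr (qsc a (qad x y)) (qad (qsc a x) (qsc a y));
  qscDl : forall a b x, qr (qsc (a + b) x) (qad (qsc a x) (qsc b x)) }.
Arguments qr {K} q _ _. Arguments qz {K} q. Arguments qad {K} q _ _.
Arguments qop {K} q _. Arguments qsc {K} q _ _.

Definition qtype K (d : qdata K) : Type := {P : qT d -> Prop | exists x, P = qr d x}.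
HB.instance Definition _ K (d : qdata K) := gen_eqMixin (qtype d).
HB.instance Definition _ K (d : qdata K) := gen_choiceMixin (qtype d).

Section Quot.
Variables (K : pzRingType) (d : qdata K).
Definition cls (x : qT d) : qtype d := exist _ (qr d x) (ex_intro _ x erefl).
Definition rep (q : qtype d) : qT d := projT1 (cid (projT2 q)).
Lemma cls_eq x y : qr d x y -> cls x = cls y.
Proof.
move=> h; apply: eq_exist_uncurried => /=.
have e : qr d x = qr d y.
  apply: funext => z; apply: propext; split => hz.
    exact: qtrans (qsym h) hz.
  exact: qtrans h hz.
by exists e; apply: Prop_irrelevance.
Qed.
Lemma cls_eqP x y : cls x = cls y -> qr d x y.
Proof.
move=> h; have e : qr d x = qr d y by exact: (congr1 (@proj1_sig _ _) h).
by rewrite e; apply: qrefl.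
Qed.
Lemma repK q : cls (rep q) = q.
Proof.
rewrite /rep; case: (cid _) => x /= e; case: q e => P hP /= e.
by apply: eq_exist_uncurried; exists (esym e); apply: Prop_irrelevance.
Qed.
Lemma cls_surj q : exists x, q = cls x.
Proof. by exists (rep q); rewrite repK. Qed.
Lemma rep_rel x : qr d (rep (cls x)) x.
Proof. by apply: cls_eqP; rewrite repK. Qed.

Definition qzero := cls (qz d).
Definition qadd q q' := cls (qad d (rep q) (rep q')).
Definition qopp q := cls (qop d (rep q)).
Definition qscale a q := cls (qsc d a (rep q)).
Lemma qaddE x y : qadd (cls x) (cls y) = cls (qad d x y).
Proof. by apply: cls_eq; apply: qadC; apply: rep_rel. Qed.
Lemma qoppE x : qopp (cls x) = cls (qop d x).
Proof. by apply: cls_eq; apply: qopC; apply: rep_rel. Qed.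
Lemma qscaleE a x : qscale a (cls x) = cls (qsc d a x).
Proof. by apply: cls_eq; apply: qscC; apply: rep_rel. Qed.

Lemma qaddA' : associative qadd.
Proof.
move=> a b c; case: (cls_surj a) (cls_surj b) (cls_surj c) => x -> [y ->] [z ->].
by rewrite !qaddE; apply: cls_eq; apply: qaddA.
Qed.
Lemma qaddC' : commutative qadd.
Proof.
move=> a b; case: (cls_surj a) (cls_surj b) => x -> [y ->].
by rewrite !qaddE; apply: cls_eq; apply: qaddC.
Qed.
Lemma qadd0' : left_id qzero qadd.
Proof. move=> a; case: (cls_surj a) => x ->; rewrite qaddE; apply: cls_eq; apply: qadd0. Qed.
Lemma qaddN' : left_inverse qzero qopp qadd.
Proof.
move=> a; case: (cls_surj a) => x ->; rewrite qoppE qaddE; apply: cls_eq; apply: qaddN.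
Qed.
End Quot.

HB.instance Definition _ K (d : qdata K) :=
  GRing.isZmodule.Build (qtype d) (@qaddA' K d) (@qaddC' K d) (@qadd0' K d) (@qaddN' K d).

Section QuotL.
Variables (K : pzRingType) (d : qdata K).
Lemma qaddDef (u v : qtype d) : u + v = qadd u v.
Proof. by []. Qed.
Lemma qscA' a b (v : qtype d) : qscale a (qscale b v) = qscale (a * b) v.
Proof. case: (cls_surj v) => x ->; rewrite !qscaleE; apply: cls_eq; apply: qscA. Qed.
Lemma qsc1' : left_id 1 (@qscale K d).
Proof. move=> v; case: (cls_surj v) => x ->; rewrite !qscaleE; apply: cls_eq; apply: qsc1. Qed.
Lemma qscDr' : right_distributive (@qscale K d) +%R.
Proof.
move=> a u v; case: (cls_surj u) (cls_surj v) => x -> [y ->].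
rewrite !qaddDef (qaddE x y) !qscaleE qaddE; apply: cls_eq; apply: qscDr.
Qed.
Lemma qscDl' (v : qtype d) : {morph (@qscale K d)^~ v : a b / a + b}.
Proof.
move=> a b; case: (cls_surj v) => x ->.
rewrite !qaddDef !qscaleE qaddE; apply: cls_eq; apply: qscDl.
Qed.
End QuotL.

HB.instance Definition _ K (d : qdata K) :=
  GRing.Zmodule_isLmodule.Build K (qtype d) (@qscA' K d) (@qsc1' K d) (@qscDr' K d) (@qscDl' K d).

Section QuotFacts.
Variables (K : pzRingType) (d : qdata K).
Lemma clsD x y : cls x + cls y = cls (qad d x y) :> qtype d.
Proof. exact: qaddE. Qed.
Lemma clsN x : - cls x = cls (qop d x) :> qtype d.
Proof. exact: qoppE. Qed.
Lemma clsZ a x : a *: cls x = cls (qsc d a x) :> qtype d.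
Proof. exact: qscaleE. Qed.
Lemma cls0 : 0 = cls (qz d) :> qtype d.
Proof. by []. Qed.
End QuotFacts.

Section Slin.
Variables (R' S' : comPzRingType) (phi : R' -> S') (M : lmodType R') (N : lmodType S')
  (f : M -> N) (hf : slinear phi f).
Lemma slinD x y : f (x + y) = f x + f y. Proof. exact: hf.1. Qed.
Lemma slinZ r x : f (r *: x) = phi r *: f x. Proof. exact: hf.2. Qed.
Lemma slin0 : f 0 = 0.
Proof. by apply: (addIr (f 0)); rewrite -slinD !add0r. Qed.
Lemma slinN x : f (- x) = - f x.
Proof. by apply: (addIr (f x)); rewrite -slinD !addNr slin0. Qed.
Lemma slinB x y : f (x - y) = f x - f y.
Proof. by rewrite slinD slinN. Qed.
End Slin.

Definition evm (S0 : pzRingType) (M0 : Type) (Y : lmodType S0) (g : M0 -> Y)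
  (r : seq (M0 * S0)) : Y := \sum_(p <- r) p.2 *: g p.1.

Lemma evm_cat (S0 : pzRingType) (M0 : Type) (Y : lmodType S0) (g : M0 -> Y) r r' :
  evm g (r ++ r') = evm g r + evm g r'.
Proof. by rewrite /evm big_cat. Qed.
Lemma evm_cons (S0 : pzRingType) (M0 : Type) (Y : lmodType S0) (g : M0 -> Y) p r :
  evm g (p :: r) = p.2 *: g p.1 + evm g r.
Proof. by rewrite /evm big_cons. Qed.
Lemma evm_nil (S0 : pzRingType) (M0 : Type) (Y : lmodType S0) (g : M0 -> Y) :
  evm g [::] = 0.
Proof. by rewrite /evm big_nil. Qed.

Lemma slin_evm (S0 S1 : comPzRingType) (phi : S0 -> S1) (M0 : Type) (X : lmodType S0)
  (Y : lmodType S1) (j : M0 -> X) (f : X -> Y) (hf : slinear phi f) r :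
  f (evm j r) = evm (fun m => f (j m)) (map (fun p => (p.1, phi p.2)) r).
Proof.
elim: r => [|p r IH] /=; first by rewrite !evm_nil (slin0 hf).
by rewrite !evm_cons (slinD hf) (slinZ hf) IH.
Qed.

Arguments slin_evm [S0 S1 phi M0 X Y j f] hf r.

Lemma slin_kid (k : comPzRingType) (T : kalg k) (X Y : lmodType T) (h : X -> Y) :
  slinear (kid T) h <-> (forall x y, h (x + y) = h x + h y) /\ (forall r x, h (r *: x) = r *: h x).
Proof. by []. Qed.

Section Tens.
Variables (k : comPzRingType) (R S : kalg k) (a : kmor R S) (M : lmodType R).

Definition trel (r r' : seq (M * S)) : Prop :=
  forall (Y : lmodType S) (g : M -> Y), slinear a g -> evm g r = evm g r'.

Definition tneg (r : seq (M * S)) := map (fun p => (p.1, - p.2)) r.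
Definition tsc (s : S) (r : seq (M * S)) := map (fun p => (p.1, s * p.2)) r.

Lemma evm_neg (Y : lmodType S) (g : M -> Y) r : evm g (tneg r) = - evm g r.
Proof.
elim: r => [|p r IH]; first by rewrite /= !evm_nil oppr0.
by rewrite /= !evm_cons IH opprD scaleNr.
Qed.
Lemma evm_sc (Y : lmodType S) (g : M -> Y) s r : evm g (tsc s r) = s *: evm g r.
Proof.
elim: r => [|p r IH]; first by rewrite /= !evm_nil scaler0.
by rewrite /= !evm_cons IH scalerDr scalerA.
Qed.

Definition tdata : qdata S.
refine (@QData S (seq (M * S)) trel [::] cat tneg tsc _ _ _ _ _ _ _ _ _ _ _ _ _ _).
- by [].
- by move=> x y h Y g hg; rewrite h.
- by move=> x y z h1 h2 Y g hg; rewrite h1 ?h2.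
- by move=> x x' y y' h1 h2 Y g hg; rewrite !evm_cat h1 ?h2.
- by move=> x x' h Y g hg; rewrite !evm_neg h.
- by move=> s x x' h Y g hg; rewrite !evm_sc h.
- by move=> x y z Y g hg; rewrite catA.
- by move=> x y Y g hg; rewrite !evm_cat addrC.
- by [].
- by move=> x Y g hg; rewrite evm_cat evm_neg addNr evm_nil.
- by move=> s t x Y g hg; rewrite !evm_sc scalerA.
- by move=> x Y g hg; rewrite evm_sc scale1r.
- by move=> s x y Y g hg; rewrite evm_sc !evm_cat !evm_sc scalerDr.
- by move=> s t x Y g hg; rewrite evm_sc !evm_cat !evm_sc scalerDl.
Defined.

Definition Tens : lmodType S := qtype tdata.
Definition jT (m : M) : Tens := @cls _ tdata [:: (m, 1)].

Lemma cls_evm (r : seq (M * S)) : (@cls _ tdata r : Tens) = evm jT r.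
Proof.
elim: r => [|p r IH]; first by rewrite evm_nil.
rewrite evm_cons -IH /jT clsZ clsD; apply: cls_eq => Y g hg /=.
by case: p => ? ? /=; rewrite mulr1.
Qed.

Lemma jT_slin : slinear a jT.
Proof.
split.
  move=> x y; rewrite /jT clsD; apply: cls_eq => Y g hg /=.
  by rewrite !evm_cons !evm_nil !addr0 !scale1r (slinD hg).
move=> r x; rewrite /jT clsZ; apply: cls_eq => Y g hg /=.
by rewrite !evm_cons !evm_nil !addr0 scale1r (slinZ hg) mulr1.
Qed.

Lemma Tens_bc : mod_bc a jT.
Proof.
split; first exact: jT_slin.
move=> Y g hg.
have key : forall r r', (@cls _ tdata r : Tens) = @cls _ tdata r' -> evm g r = evm g r'.
  by move=> r r' /cls_eqP h; apply: h.
exists (fun q : Tens => evm g (rep q)); split.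
- split.
    move=> x y; rewrite -evm_cat; apply: key.
    by rewrite repK -clsD !repK.
  move=> r x /=; rewrite -evm_sc; apply: key.
  by rewrite repK -clsZ !repK.
- move=> m; rewrite -[g m](_ : evm g [:: (m,1)] = g m); first by apply: key; rewrite repK.
  by rewrite evm_cons evm_nil addr0 scale1r.
- move=> h' hh' hm x.
  rewrite -[x in LHS]repK cls_evm (slin_evm hh') /evm big_map.
  by apply: eq_bigr => p _ /=; rewrite hm.
Qed.
End Tens.

Section BC.
Variables (k : comPzRingType) (R S : kalg k) (a : kmor R S) (M : lmodType R)
  (X : lmodType S) (j : M -> X) (hj : mod_bc a j).

Lemma bc_map (Y : lmodType S) (g : M -> Y) : slinear a g ->
  {h : X -> Y | slinear (kid S) h /\ forall m, h (j m) = g m}.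
Proof.
move=> hg; apply: cid; case: (hj.2 Y g hg) => h [h1 h2 _]; by exists h.
Qed.

Lemma bc_span x : exists r : seq (M * S), x = evm j r.
Proof.
case: (bc_map (Tens_bc a M).1) => f [hf1 hf2].
case: (Tens_bc a M) => _ /(_ X j hj.1) [g [hg1 hg2 hg3]].
have gf : forall x, g (f x) = x.
  move=> y; case: (hj.2 X j hj.1) => i [_ _ hi].
  transitivity (i y).
    apply: (hi (fun x => g (f x))).
    - split; first by move=> z z'; rewrite /= (slinD hf1) (slinD hg1).
      by move=> r z; rewrite /= (slinZ hf1) (slinZ hg1).
    - by move=> m; rewrite hf2 hg2.
  by symmetry; apply: (hi id).
exists (rep (f x)).
rewrite -{1}[x]gf -{1}[f x]repK cls_evm (slin_evm hg1) /evm big_map.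
by apply: eq_bigr => p _ /=; rewrite hg2.
Qed.

Lemma bc_ext (S1 : comPzRingType) (phi : S -> S1) (Y : lmodType S1) (f f' : X -> Y) :
  slinear phi f -> slinear phi f' -> (forall m, f (j m) = f' (j m)) ->
  forall x, f x = f' x.
Proof.
move=> hf hf' e x; case: (bc_span x) => r ->.
rewrite (slin_evm hf) (slin_evm hf'); rewrite /evm; apply: eq_bigr => p _.
by rewrite e.
Qed.
End BC.

Definition restr (k : comPzRingType) (R S : kalg k) (a : kmor R S) (V : lmodType S) : Type := V.
HB.instance Definition _ (k : comPzRingType) (R S : kalg k) (a : kmor R S) (V : lmodType S) := GRing.Zmodule.on (@restr k R S a V).

Section Restr.
Variables (k : comPzRingType) (R S : kalg k) (a : kmor R S) (V : lmodType S).
Definition rscale (r : R) (v : restr a V) : restr a V := (a r *: (v : V)).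
Lemma rscA r s v : rscale r (rscale s v) = rscale (r * s) v.
Proof. by case: (kfun_rhom a) => _ hm _; rewrite /rscale scalerA hm. Qed.
Lemma rsc1 : left_id 1 rscale.
Proof. by case: (kfun_rhom a) => _ _ h1 v; rewrite /rscale h1 scale1r. Qed.
Lemma rscDr : right_distributive rscale +%R.
Proof. by move=> r u v; rewrite /rscale scalerDr. Qed.
Lemma rscDl v : {morph rscale^~ v : r s / r + s}.
Proof. by case: (kfun_rhom a) => hd _ _ r s; rewrite /rscale hd scalerDl. Qed.
End Restr.
HB.instance Definition _ (k : comPzRingType) (R S : kalg k) (a : kmor R S) (V : lmodType S) :=
  GRing.Zmodule_isLmodule.Build R (@restr k R S a V) (@rscA k R S a V) (@rsc1 k R S a V)
    (@rscDr k R S a V) (@rscDl k R S a V).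

Lemma restrZ (k : comPzRingType) (R S : kalg k) (a : kmor R S) (V : lmodType S) r (v : restr a V) :
  r *: v = (a r *: (v : V) : V).
Proof. by []. Qed.

Record sdata (K : pzRingType) := SData {
  sV : lmodType K;
  sP : sV -> Prop;
  sP0 : sP 0;
  sPD : forall x y, sP x -> sP y -> sP (x + y);
  sPN : forall x, sP x -> sP (- x);
  sPZ : forall a x, sP x -> sP (a *: x) }.

Definition stype K (d : sdata K) : Type := {x : sV d | sP x}.
HB.instance Definition _ K (d : sdata K) := gen_eqMixin (stype d).
HB.instance Definition _ K (d : sdata K) := gen_choiceMixin (stype d).

Section Sub.
Variables (K : pzRingType) (d : sdata K).
Lemma sval_inj (x y : stype d) : sval x = sval y -> x = y.
Proof.
case: x y => x hx [y hy] /= e; apply: eq_exist_uncurried; exists e; exact: Prop_irrelevance.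
Qed.
Definition szero : stype d := exist _ 0 (sP0 d).
Definition sadd (x y : stype d) : stype d := exist _ (sval x + sval y) (sPD (proj2_sig x) (proj2_sig y)).
Definition sopp (x : stype d) : stype d := exist _ (- sval x) (sPN (proj2_sig x)).
Definition sscale a (x : stype d) : stype d := exist _ (a *: sval x) (sPZ a (proj2_sig x)).
Lemma saddA : associative sadd. Proof. by move=> x y z; apply: sval_inj; rewrite /= addrA. Qed.
Lemma saddC : commutative sadd. Proof. by move=> x y; apply: sval_inj; rewrite /= addrC. Qed.
Lemma sadd0 : left_id szero sadd. Proof. by move=> x; apply: sval_inj; rewrite /= add0r. Qed.
Lemma saddN : left_inverse szero sopp sadd. Proof. by move=> x; apply: sval_inj; rewrite /= addNr. Qed.
End Sub.
HB.instance Definition _ K (d : sdata K) :=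
  GRing.isZmodule.Build (stype d) (@saddA K d) (@saddC K d) (@sadd0 K d) (@saddN K d).
Section Sub2.
Variables (K : pzRingType) (d : sdata K).
Lemma sscA a b (v : stype d) : sscale a (sscale b v) = sscale (a * b) v.
Proof. by apply: sval_inj; rewrite /= scalerA. Qed.
Lemma ssc1 : left_id 1 (@sscale K d).
Proof. by move=> v; apply: sval_inj; rewrite /= scale1r. Qed.
Lemma sscDr : right_distributive (@sscale K d) +%R.
Proof. by move=> a u v; apply: sval_inj; rewrite /= scalerDr. Qed.
Lemma sscDl (v : stype d) : {morph (@sscale K d)^~ v : a b / a + b}.
Proof. by move=> a b; apply: sval_inj; rewrite /= scalerDl. Qed.
End Sub2.
HB.instance Definition _ K (d : sdata K) :=
  GRing.Zmodule_isLmodule.Build K (stype d) (@sscA K d) (@ssc1 K d) (@sscDr K d) (@sscDl K d).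

Lemma svalD K (d : sdata K) (x y : stype d) : sval (x + y) = sval x + sval y. Proof. by []. Qed.
Lemma svalZ K (d : sdata K) a (x : stype d) : sval (a *: x) = a *: sval x. Proof. by []. Qed.
Lemma sval0 K (d : sdata K) : sval (0 : stype d) = 0. Proof. by []. Qed.
Lemma svalN K (d : sdata K) (x : stype d) : sval (- x) = - sval x. Proof. by []. Qed.

Section Imq.
Variables (K : pzRingType) (V W : lmodType K) (f : W -> V)
  (fD : forall x y, f (x + y) = f x + f y) (fZ : forall a x, f (a *: x) = a *: f x).
Lemma f0 : f 0 = 0. Proof. by apply: (addIr (f 0)); rewrite -fD !add0r. Qed.
Lemma fN x : f (- x) = - f x. Proof. by apply: (addIr (f x)); rewrite -fD !addNr f0. Qed.
Definition irel (x y : V) := exists m, x - y = f m.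
Lemma irel_eq x y : x = y -> irel x y.
Proof. by move=> ->; exists 0; rewrite subrr f0. Qed.
Definition imq : qdata K.
refine (@QData K V irel 0 +%R -%R *:%R _ _ _ _ _ _ _ _ _ _ _ _ _ _).
- by move=> x; exists 0; rewrite subrr f0.
- by move=> x y [m e]; exists (- m); rewrite fN -e opprB.
- by move=> x y z [m e] [m' e']; exists (m + m'); rewrite fD -e -e' addrA subrK.
- move=> x x' y y' [m e] [m' e']; exists (m + m'); rewrite fD -e -e'.
  by rewrite opprD addrACA.
- by move=> x x' [m e]; exists (- m); rewrite fN -e opprB opprK addrC.
- by move=> a x x' [m e]; exists (a *: m); rewrite fZ -e scalerBr.
- by move=> x y z; apply: irel_eq; rewrite addrA.
- by move=> x y; apply: irel_eq; rewrite addrC.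
- by move=> x; apply: irel_eq; rewrite add0r.
- by move=> x; apply: irel_eq; rewrite addNr.
- by move=> a b x; apply: irel_eq; rewrite scalerA.
- by move=> x; apply: irel_eq; rewrite scale1r.
- by move=> a x y; apply: irel_eq; rewrite scalerDr.
- by move=> a b x; apply: irel_eq; rewrite scalerDl.
Defined.
Definition Qt : lmodType K := qtype imq.
Definition qpr (x : V) : Qt := @cls _ imq x.
Lemma qprD x y : qpr (x + y) = qpr x + qpr y. Proof. by rewrite /qpr clsD. Qed.
Lemma qprZ a x : qpr (a *: x) = a *: qpr x. Proof. by rewrite /qpr clsZ. Qed.
Lemma qpr_surj q : exists x, q = qpr x. Proof. by case: (@cls_surj _ imq q) => x ->; exists x. Qed.
Lemma qpr0 x : qpr x = 0 -> exists m, x = f m.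
Proof. by move=> /cls_eqP [m e]; exists m; rewrite -e subr0. Qed.
Lemma qpr_im m : qpr (f m) = 0.
Proof. by rewrite cls0; apply: cls_eq; exists m; rewrite subr0. Qed.
End Imq.

Definition addv (V : zmodType) (f : V -> V) := forall x y, f (x + y) = f x + f y.
Definition commf (V : Type) (f g : V -> V) := forall y, f (g y) = g (f y).
Definition Zc (V : zmodType) (Zs : (V -> V) -> Prop) (psi : V -> V) :=
  addv psi /\ forall phi, Zs phi -> commf psi phi.

Record bcd := BCD {
  bV : zmodType;
  bZ : (bV -> bV) -> Prop;
  bH : forall phi, bZ phi -> Zc bZ phi }.

Definition Zcc (d : bcd) (f : bV d -> bV d) := addv f /\ forall psi, Zc (@bZ d) psi -> commf f psi.
Definition btype (d : bcd) : Type := {f : bV d -> bV d | Zcc f}.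
HB.instance Definition _ (d : bcd) := gen_eqMixin (btype d).
HB.instance Definition _ (d : bcd) := gen_choiceMixin (btype d).

Section Bic.
Variable d : bcd.
Local Notation V := (bV d).
Lemma bval_inj (x y : btype d) : sval x = sval y -> x = y.
Proof.
case: x y => x hx [y hy] /= e; apply: eq_exist_uncurried; exists e; exact: Prop_irrelevance.
Qed.
Lemma addv0 (f : V -> V) : addv f -> f 0 = 0.
Proof. by move=> h; apply: (addIr (f 0)); rewrite -h !add0r. Qed.
Lemma addvN (f : V -> V) : addv f -> forall x, f (- x) = - f x.
Proof. by move=> h x; apply: (addIr (f x)); rewrite -h !addNr addv0. Qed.

Lemma Zcc0 : @Zcc d (fun _ : V => 0).
Proof.
split; first by move=> x y; rewrite addr0.
by move=> psi [hp _] y; rewrite addv0.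
Qed.
Lemma ZccD (f g : V -> V) : Zcc f -> Zcc g -> @Zcc d (fun x => f x + g x).
Proof.
move=> [f1 f2] [g1 g2]; split.
  by move=> x y; rewrite f1 g1 addrACA.
by move=> psi hp y; rewrite f2 // g2 // hp.1.
Qed.
Lemma ZccN (f : V -> V) : Zcc f -> @Zcc d (fun x => - f x).
Proof.
move=> [f1 f2]; split.
  by move=> x y; rewrite f1 opprD.
by move=> psi hp y; rewrite f2 // (addvN hp.1).
Qed.
Lemma Zcc1 : @Zcc d (fun x : V => x).
Proof. by split. Qed.
Lemma ZccM (f g : V -> V) : Zcc f -> Zcc g -> @Zcc d (fun x => f (g x)).
Proof.
move=> [f1 f2] [g1 g2]; split.
  by move=> x y; rewrite g1 f1.
by move=> psi hp y; rewrite g2 // f2.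
Qed.
Lemma Zcc_Zc (f : V -> V) : Zcc f -> Zc (@bZ d) f.
Proof.
move=> [f1 f2]; split => // phi hphi y.
by rewrite f2 //; apply: bH.
Qed.
Lemma Z_Zcc (phi : V -> V) : bZ phi -> Zcc phi.
Proof.
move=> h; split; first exact: (bH h).1.
by move=> psi [_ hp] y; rewrite hp.
Qed.

Definition bzero : btype d := exist _ _ Zcc0.
Definition badd (x y : btype d) : btype d := exist _ _ (ZccD (proj2_sig x) (proj2_sig y)).
Definition bopp (x : btype d) : btype d := exist _ _ (ZccN (proj2_sig x)).
Definition bone : btype d := exist _ _ Zcc1.
Definition bmul (x y : btype d) : btype d := exist _ _ (ZccM (proj2_sig x) (proj2_sig y)).
Lemma baddA : associative badd.
Proof. by move=> x y z; apply: bval_inj; apply: funext => v /=; rewrite addrA. Qed.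
Lemma baddC : commutative badd.
Proof. by move=> x y; apply: bval_inj; apply: funext => v /=; rewrite addrC. Qed.
Lemma badd0 : left_id bzero badd.
Proof. by move=> x; apply: bval_inj; apply: funext => v /=; rewrite add0r. Qed.
Lemma baddN : left_inverse bzero bopp badd.
Proof. by move=> x; apply: bval_inj; apply: funext => v /=; rewrite addNr. Qed.
End Bic.

HB.instance Definition _ (d : bcd) :=
  GRing.isZmodule.Build (btype d) (@baddA d) (@baddC d) (@badd0 d) (@baddN d).

Section Bic2.
Variable d : bcd.
Lemma bmulA : associative (@bmul d).
Proof. by move=> x y z; apply: bval_inj; apply: funext => v /=. Qed.
Lemma bmulC : commutative (@bmul d).
Proof.
move=> [x hx] [y hy]; apply: bval_inj; apply: funext => v /=.
by rewrite hx.2 //; apply: Zcc_Zc.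
Qed.
Lemma bmul1 : left_id (@bone d) (@bmul d).
Proof. by move=> x; apply: bval_inj; apply: funext => v /=. Qed.
Lemma bmulDl : left_distributive (@bmul d) +%R.
Proof. by move=> x y z; apply: bval_inj; apply: funext => v /=. Qed.
End Bic2.

HB.instance Definition _ (d : bcd) :=
  GRing.Zmodule_isComPzRing.Build (btype d) (@bmulA d) (@bmulC d) (@bmul1 d) (@bmulDl d).

Section Bic3.
Variable d : bcd.
Lemma bvalD (x y : btype d) v : sval (x + y) v = sval x v + sval y v. Proof. by []. Qed.
Lemma bvalM (x y : btype d) v : sval (x * y) v = sval x (sval y v). Proof. by []. Qed.
Lemma bval1 v : sval (1 : btype d) v = v. Proof. by []. Qed.
Lemma bval_add (x : btype d) : addv (sval x). Proof. exact: (proj2_sig x).1. Qed.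
Definition bin (phi : bV d -> bV d) (h : bZ phi) : btype d := exist _ phi (Z_Zcc h).
End Bic3.

Record actd (K : pzRingType) := ActD {
  aV : zmodType;
  act : K -> aV -> aV;
  actA : forall a b v, act a (act b v) = act (a * b) v;
  act1 : forall v, act 1 v = v;
  actDr : forall a u v, act a (u + v) = act a u + act a v;
  actDl : forall a b v, act (a + b) v = act a v + act b v }.
Arguments act {K} a0 _ _.
Definition atype K (d : actd K) : Type := aV d.
HB.instance Definition _ K (d : actd K) := GRing.Zmodule.on (atype d).
Section Act.
Variables (K : pzRingType) (d : actd K).
Definition ascale (a : K) (v : atype d) : atype d := act d a v.
Lemma ascA a b v : ascale a (ascale b v) = ascale (a * b) v. Proof. exact: actA. Qed.
Lemma asc1 : left_id 1 ascale. Proof. exact: act1. Qed.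
Lemma ascDr : right_distributive ascale +%R. Proof. exact: actDr. Qed.
Lemma ascDl v : {morph ascale^~ v : a b / a + b}. Proof. by move=> a b; apply: actDl. Qed.
End Act.
HB.instance Definition _ K (d : actd K) :=
  GRing.Zmodule_isLmodule.Build K (atype d) (@ascA K d) (@asc1 K d) (@ascDr K d) (@ascDl K d).

Lemma evm_zero (S0 : pzRingType) (M0 : Type) (Y : lmodType S0) (g : M0 -> Y) r :
  (forall m, g m = 0) -> evm g r = 0.
Proof. by move=> h; rewrite /evm big1 // => p _; rewrite h scaler0. Qed.

Lemma map_pair_id (A B : Type) (r : seq (A * B)) : map (fun p => (p.1, p.2)) r = r.
Proof. by elim: r => //= [[x y] r] ->. Qed.

Section Descent.
Variables (k : comPzRingType) (R S S2 : kalg k) (alpha : kmor R S) (a1 a2 : kmor S S2)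
  (HS2 : ring_tensor alpha a1 a2) (Hff : faithfully_flat alpha)
  (M : lmodType R) (MS : lmodType S) (jM : M -> MS) (HjM : mod_bc alpha jM)
  (MS2 : lmodType S2) (jM2 : M -> MS2) (HjM2 : mod_bc (kcomp alpha a1) jM2)
  (e1 e2 : MS -> MS2)
  (He1 : slinear a1 e1 /\ forall m, e1 (jM m) = jM2 m)
  (He2 : slinear a2 e2 /\ forall m, e2 (jM m) = jM2 m).

Lemma desc_inj : injective jM.
Proof.
have hjM := HjM.1.
have c1 : forall x y, jM x = 0 -> jM y = 0 -> jM (x + y) = 0.
  by move=> x y hx hy; rewrite (slinD hjM) hx hy addr0.
have c2 : forall x, jM x = 0 -> jM (- x) = 0.
  by move=> x hx; rewrite (slinN hjM) hx oppr0.
have c3 : forall r x, jM x = 0 -> jM (r *: x) = 0.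
  by move=> r x hx; rewrite (slinZ hjM) hx scaler0.
pose K := @SData R M (fun x => jM x = 0) (slin0 hjM) c1 c2 c3.
have z0 : forall t : Tens alpha (stype K), t = 0.
  move=> t.
  have := Hff.1 (stype K) M (@sval _ _) (conj (fun x y => erefl) (fun r x => erefl))
    (@sval_inj _ K) _ _ _ _ (Tens_bc alpha (stype K)) HjM (fun _ => 0).
  move=> /(_ (conj (fun x y => esym (addr0 0)) (fun r x => esym (scaler0 _ _)))).
  move=> /(_ (fun m => esym (proj2_sig m))) inj.
  exact: inj.
have zK : forall m : stype K, m = 0 := Hff.2 _ _ _ (Tens_bc alpha (stype K)) z0.
move=> x y e.
have hxy : jM (x - y) = 0 by rewrite (slinB hjM) e subrr.
have := zK (exist _ _ hxy) => /(congr1 (@sval _ _)) /= /eqP.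
by rewrite subr_eq0 => /eqP.
Qed.

Section Desc2.
Local Notation MSR := (restr alpha MS).
Local Notation T := (Tens alpha MSR).
Local Notation j' := (@jT k R S alpha MSR).
Let hj' : slinear alpha j' := jT_slin alpha MSR.
Let HT : mod_bc alpha j' := Tens_bc alpha MSR.

Lemma lam_ex (s : S) : slinear alpha (fun y : MSR => j' ((s *: (y : MS)) : MS)).
Proof.
split.
  by move=> x y; rewrite -(slinD hj'); congr j'; rewrite scalerDr.
move=> r x; rewrite -(slinZ hj'); congr j'.
by rewrite !restrZ !scalerA mulrC.
Qed.
Definition lam (s : S) : T -> T := sval (bc_map HT (lam_ex s)).
Lemma lam_lin s : slinear (kid S) (lam s). Proof. exact: (proj2_sig (bc_map HT (lam_ex s))).1. Qed.
Lemma lamE s (y : MS) : lam s (j' y) = j' (s *: y : MS).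
Proof. exact: (proj2_sig (bc_map HT (lam_ex s))).2. Qed.
Definition rho (s : S) : T -> T := fun t => s *: t.

Lemma lam_comm s t x : lam s (lam t x) = lam t (lam s x).
Proof.
have hc : forall s t, slinear (kid S) (fun x => lam s (lam t x)).
  move=> s' t'; split => [y z|r y]; first by rewrite !(slinD (lam_lin _)).
  by rewrite !(slinZ (lam_lin _)).
apply: (bc_ext HT (hc s t) (hc t s)) => m.
by rewrite !lamE !scalerA mulrC.
Qed.

Definition Zs (phi : T -> T) : Prop := exists s, phi = lam s \/ phi = rho s.
Lemma Zs_H phi : Zs phi -> Zc Zs phi.
Proof.
case=> s [->|->]; split.
- exact: (lam_lin s).1.
- move=> ph [t [->|->]] y; first exact: lam_comm.
  by rewrite /rho (slinZ (lam_lin s)).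
- by move=> x y; rewrite /rho scalerDr.
- move=> ph [t [->|->]] y; first by rewrite /rho (slinZ (lam_lin t)).
  by rewrite /rho !scalerA mulrC.
Qed.
Definition Bd := @BCD T Zs Zs_H.
Definition Cb := btype Bd.
Lemma Zs_rho s : Zs (rho s). Proof. by exists s; right. Qed.
Lemma Zs_lam s : Zs (lam s). Proof. by exists s; left. Qed.
Definition rhoC (s : S) : Cb := @bin Bd (rho s) (Zs_rho s).
Definition lamC (s : S) : Cb := @bin Bd (lam s) (Zs_lam s).

Lemma rhoC_rhom : rhom rhoC.
Proof.
split.
- by move=> x y; apply: bval_inj; apply: funext => v /=; rewrite /rho scalerDl.
- by move=> x y; apply: bval_inj; apply: funext => v /=; rewrite /rho scalerA.
- by apply: bval_inj; apply: funext => v /=; rewrite /rho scale1r.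
Qed.
Lemma lamC_rhom : rhom lamC.
Proof.
have e : forall f g : Cb, (forall y, sval f (j' y) = sval g (j' y)) ->
   slinear (kid S) (sval f) -> slinear (kid S) (sval g) -> f = g.
  move=> f g h hf hg; apply: bval_inj; apply: funext.
  exact: (bc_ext HT hf hg h).
have lin : forall f : Cb, (forall s x, sval f (s *: x) = s *: sval f x) -> slinear (kid S) (sval f).
  by move=> f h; split; [exact: (bval_add f) | move=> r x; rewrite h].
split.
- move=> x y; apply: e.
  + by move=> m /=; rewrite !lamE scalerDl (slinD hj').
  + exact: lam_lin.
  + apply: lin => s v; rewrite !bvalD /= (slinZ (lam_lin x)) (slinZ (lam_lin y)).
    by rewrite scalerDr.
- move=> x y; apply: e.
  + by move=> m /=; rewrite !lamE scalerA.
  + exact: lam_lin.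
  + by apply: lin => s v /=; rewrite (slinZ (lam_lin y)) (slinZ (lam_lin x)).
- apply: e.
  + by move=> m /=; rewrite lamE scale1r.
  + exact: lam_lin.
  + by apply: lin.
Qed.

Lemma lam_alpha r : lamC (alpha r) = rhoC (alpha r).
Proof.
apply: bval_inj; apply: funext => v /=.
have hr : slinear (kid S) (rho (alpha r)).
  by split => [x y|s x]; rewrite /rho ?scalerDr // !scalerA mulrC.
apply: (bc_ext HT (lam_lin _) hr) => m.
by rewrite lamE /rho -(slinZ hj').
Qed.

Lemma kstrC_rhom : rhom (fun c => rhoC (kstr S c)).
Proof.
case: (kstr_rhom S) => s1 s2 s3; case: rhoC_rhom => r1 r2 r3.
by split => [x y|x y|]; rewrite ?s1 ?r1 ?s2 ?r2 ?s3 ?r3.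
Qed.
Definition CK : kalg k := @KAlg k Cb (fun c => rhoC (kstr S c)) kstrC_rhom.
Lemma lamK_k c : lamC (kstr S c) = kstr CK c.
Proof. by rewrite /= -(kfun_k alpha) lam_alpha. Qed.
Definition lamK : kmor S CK := @KMor k S CK lamC lamC_rhom lamK_k.
Definition rhoK : kmor S CK := @KMor k S CK rhoC rhoC_rhom (fun c => erefl).

End Desc2.

Local Notation MSR := (restr alpha MS).
Local Notation T := (Tens alpha MSR).
Local Notation j' := (@jT k R S alpha MSR).

Lemma desc_eq x : e1 x = e2 x -> exists m, jM m = x.
Proof.
have hj' : slinear alpha j' := jT_slin alpha MSR.
have HT : mod_bc alpha j' := Tens_bc alpha MSR.
case: HS2 => hcomm /(_ CK lamK rhoK lam_alpha) [h [h1 h2 _]].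
case: (kfun_rhom h) => hD hM h1'.
pose AD := @ActD S2 T (fun s v => sval (h s) v)
  (fun a b v => esym (congr1 (fun f : Cb => sval f v) (hM a b)))
  (fun v => congr1 (fun f : Cb => sval f v) h1')
  (fun a u v => bval_add (h a) u v)
  (fun a b v => congr1 (fun f : Cb => sval f v) (hD a b)).
pose Y := atype AD.
have actE : forall s (v : Y), s *: v = sval (h s) v by [].
have gl : slinear (kcomp alpha a1) (fun m => (j' (jM m : MSR) : Y)).
  split => [m m'|r m]; first by rewrite (slinD HjM.1) (slinD hj').
  by rewrite actE /= h1 /= lamE (slinZ HjM.1).
case: (bc_map HjM2 gl) => chi [chiL chiE].
have ce1 : forall y : MS, chi (e1 y) = (j' (y : MSR) : Y).
  apply: (bc_ext (phi := a1) HjM).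
  - split => [y z|s y]; first by rewrite (slinD He1.1) (slinD chiL).
    by rewrite (slinZ He1.1) (slinZ chiL).
  - split => [y z|s y]; first by rewrite (slinD hj').
    by rewrite actE h1 /= lamE.
  - by move=> m; rewrite He1.2 chiE.
have ce2 : forall r, chi (e2 (evm jM r)) = evm (fun m => j' (jM m : MSR)) r.
  elim=> [|p r IH]; first by rewrite !evm_nil (slin0 He2.1) (slin0 chiL).
  rewrite !evm_cons (slinD He2.1) (slinD chiL) IH (slinZ He2.1) (slinZ chiL).
  by rewrite He2.2 chiE actE h2.
move=> hx.
have p0 : e1 (0 : MSR) = e2 (0 : MSR) by rewrite (slin0 He1.1) (slin0 He2.1).
have pD : forall y z : MSR, e1 y = e2 y -> e1 z = e2 z -> e1 (y + z) = e2 (y + z).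
  by move=> y z hy hz; rewrite (slinD He1.1) (slinD He2.1) hy hz.
have pN : forall y : MSR, e1 y = e2 y -> e1 (- y) = e2 (- y).
  by move=> y hy; rewrite (slinN He1.1) (slinN He2.1) hy.
have pZ : forall r (y : MSR), e1 y = e2 y -> e1 (r *: y) = e2 (r *: y).
  by move=> r y hy; rewrite restrZ (slinZ He1.1) (slinZ He2.1) hy hcomm.
pose Ed := @SData R MSR (fun y => e1 y = e2 y) p0 pD pN pZ.
pose Et := stype Ed.
have pm : forall m, e1 (jM m) = e2 (jM m) by move=> m; rewrite He1.2 He2.2.
pose em := fun m => @exist _ (@sP R Ed) (jM m : MSR) (pm m) : Et.
have emD : forall m m', em (m + m') = em m + em m'.
  by move=> m m'; apply: sval_inj; rewrite /= (slinD HjM.1).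
have emZ : forall r m, em (r *: m) = r *: em m.
  by move=> r m; apply: sval_inj; rewrite /= (slinZ HjM.1).
have gEl : slinear alpha (fun e : Et => j' (sval e)).
  split => [y z|r y]; first by rewrite svalD (slinD hj').
  by rewrite svalZ (slinZ hj').
case: (bc_map (Tens_bc alpha Et) gEl) => gE [gEL gEE].
have ginj := Hff.1 Et MSR (@sval _ _) (conj (fun x y => erefl) (fun r x => erefl))
    (@sval_inj _ Ed) _ _ _ _ (Tens_bc alpha Et) HT gE gEL gEE.
pose Q := @Qt R Et M em emD emZ.
pose qp := @qpr R Et M em emD emZ.
have qpl : slinear alpha (fun e : Et => jT alpha (qp e)).
  split => [y z|r y]; first by rewrite /qp qprD (jT_slin alpha Q).1.
  by rewrite /qp qprZ (jT_slin alpha Q).2.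
case: (bc_map (Tens_bc alpha Et) qpl) => pQ [pQL pQE].
have key : forall e : Et, jT alpha (qp e) = 0.
  move=> e; case: (bc_span HjM (sval e)) => r er.
  have cl : jT alpha e = evm (fun m => jT alpha (em m)) r.
    apply: ginj; rewrite gEE (slin_evm gEL) /= map_pair_id.
    have -> : j' (sval e) = evm (fun m => j' (jM m : MSR)) r.
      by rewrite -ce2 -er -(proj2_sig e) ce1.
    by rewrite /evm; apply: eq_bigr => p _; rewrite gEE.
  have := congr1 pQ cl; rewrite pQE (slin_evm pQL) /= map_pair_id => ->.
  apply: evm_zero => m; rewrite pQE /qp qpr_im; exact: (slin0 (jT_slin alpha Q)).
have allz : forall t : Tens alpha Q, t = 0.
  move=> t; case: (bc_span (Tens_bc alpha Q) t) => r ->.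
  by apply: evm_zero => q; case: (qpr_surj q) => e ->; apply: key.
have xE : e1 (x : MSR) = e2 (x : MSR) := hx.
have := Hff.2 Q _ _ (Tens_bc alpha Q) allz (qp (@exist _ (@sP R Ed) (x : MSR) xE)).
move=> /qpr0 [m /(congr1 (@sval _ _)) /= ->]; by exists m.
Qed.

End Descent.

Section Ralg.
Variables (R : comPzRingType) (A : ralg R).
Lemma amulDl' (x y z : A) : amul (x + y) z = amul x z + amul y z.
Proof. by rewrite -{1}[x]scale1r amulDl scale1r. Qed.
Lemma amulDr' (x y z : A) : amul z (x + y) = amul z x + amul z y.
Proof. by rewrite -{1}[x]scale1r amulDr scale1r. Qed.
Lemma amul0l (z : A) : amul 0 z = 0.
Proof. by apply: (addIr (amul 0 z)); rewrite -amulDl' !add0r. Qed.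
Lemma amul0r (z : A) : amul z 0 = 0.
Proof. by apply: (addIr (amul z 0)); rewrite -amulDr' !add0r. Qed.
Lemma amulZl r (x z : A) : amul (r *: x) z = r *: amul x z.
Proof. by rewrite -[r *: x]addr0 amulDl amul0l addr0. Qed.
Lemma amulZr r (x z : A) : amul z (r *: x) = r *: amul z x.
Proof. by rewrite -[r *: x]addr0 amulDr amul0r addr0. Qed.
End Ralg.

Lemma mul_ext (k : comPzRingType) (R T T' : kalg k) (a : kmor R T) (b : kmor T T')
  (A : ralg R) (X : ralg T) (iX : ahom a A X) (hX : alg_bc iX) (Y : ralg T')
  (f : X -> Y) (hf : slinear b f) :
  (forall x y, f (amul (iX x) (iX y)) = amul (f (iX x)) (f (iX y))) ->
  forall x y, f (amul x y) = amul (f x) (f y).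
Proof.
move=> H.
have H1 : forall a0 y, f (amul (iX a0) y) = amul (f (iX a0)) (f y).
  move=> a0; apply: (bc_ext (phi := b) hX).
  - split => [y z|s y]; first by rewrite amulDr' (slinD hf).
    by rewrite amulZr (slinZ hf).
  - split => [y z|s y]; first by rewrite (slinD hf) amulDr'.
    by rewrite (slinZ hf) amulZr.
  - exact: H.
move=> x y; move: x; apply: (bc_ext (phi := b) hX).
- split => [x z|s x]; first by rewrite amulDl' (slinD hf).
  by rewrite amulZl (slinZ hf).
- split => [x z|s x]; first by rewrite (slinD hf) amulDl'.
  by rewrite (slinZ hf) amulZl.
- by move=> m /=; rewrite H1.
Qed.

Lemma inv_slin (k : comPzRingType) (T : kalg k) (X Y : lmodType T) (f : X -> Y) (g : Y -> X) :
  slinear (kid T) f -> cancel f g -> cancel g f -> slinear (kid T) g.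
Proof.
move=> hf fg gf; split => [x y|r x].
  by rewrite -{1}[x]gf -{1}[y]gf -(slinD hf) fg.
by rewrite -{1}[x]gf -[r *: f (g x)]/(kid T r *: f (g x)) -(slinZ hf) fg.
Qed.

Lemma slin_comp (k : comPzRingType) (R S T : kalg k) (a : kmor R S) (b : kmor S T)
  (X : lmodType R) (Y : lmodType S) (Z : lmodType T) (f : X -> Y) (g : Y -> Z) (c : R -> T) :
  slinear a f -> slinear b g -> (forall r, c r = b (a r)) -> slinear c (fun x => g (f x)).
Proof.
move=> hf hg hc; split => [x y|r x]; first by rewrite (slinD hf) (slinD hg).
by rewrite (slinZ hf) (slinZ hg) hc.
Qed.

Definition aid (k : comPzRingType) (R : kalg k) (A : ralg R) : ahom (kid R) A A :=
  @AHom k R R (kid R) A A (fun x => x) (conj (fun x y => erefl) (fun r x => erefl)) (fun x y => erefl).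

Lemma acomp_slin (k : comPzRingType) (R S T : kalg k) (a : kmor R S) (b : kmor S T)
  (A : ralg R) (B : ralg S) (C : ralg T) (f : ahom a A B) (g : ahom b B C) :
  slinear (kcomp a b) (fun x => g (f x)).
Proof. exact: (slin_comp (afun_slin f) (afun_slin g)). Qed.
Definition acomp (k : comPzRingType) (R S T : kalg k) (a : kmor R S) (b : kmor S T)
  (A : ralg R) (B : ralg S) (C : ralg T) (f : ahom a A B) (g : ahom b B C) : ahom (kcomp a b) A C :=
  @AHom k R T (kcomp a b) A C (fun x => g (f x)) (acomp_slin f g)
    (fun x y => etrans (congr1 g (afun_mul f x y)) (afun_mul g _ _)).

Unset Implicit Arguments.
Theorem theorem2p9
  (k : comPzRingType) (R S : kalg k) (alpha : kmor R S)
  (Hff : faithfully_flat alpha)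
  (A B : ralg R)
  (* A (x)_R S and B (x)_R S with alpha^A, alpha^B *)
  (AS : ralg S) (iAS : ahom alpha A AS) (HAS : alg_bc iAS)
  (BS : ralg S) (iBS : ahom alpha B BS) (HBS : alg_bc iBS)
  (* the S-algebra isomorphism theta *)
  (theta : ahom (kid S) AS BS) (Htheta : bijective theta)
  (* S'' = S (x)_R S with alpha_1, alpha_2 *)
  (S2 : kalg k) (alpha1 alpha2 : kmor S S2) (HS2 : ring_tensor alpha alpha1 alpha2)
  (* A (x)_R S'' and B (x)_R S'' (S'' an R-algebra via alpha_1 o alpha = alpha_2 o alpha) *)
  (AS2 : ralg S2) (iAS2 : ahom (kcomp alpha alpha1) A AS2) (HAS2 : alg_bc iAS2)
  (BS2 : ralg S2) (iBS2 : ahom (kcomp alpha alpha1) B BS2) (HBS2 : alg_bc iBS2)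
  (* Id_A (x) alpha_i and Id_B (x) alpha_i : X (x)_R S -> X (x)_R S'' *)
  (eA1 eA2 : AS -> AS2) (eB1 eB2 : BS -> BS2)
  (HeA1 : slinear alpha1 eA1 /\ forall a, eA1 (iAS a) = iAS2 a)
  (HeA2 : slinear alpha2 eA2 /\ forall a, eA2 (iAS a) = iAS2 a)
  (HeB1 : slinear alpha1 eB1 /\ forall b, eB1 (iBS b) = iBS2 b)
  (HeB2 : slinear alpha2 eB2 /\ forall b, eB2 (iBS b) = iBS2 b)
  (* theta_1, theta_2 : the S''-linear maps corresponding to theta (x)_{alpha_i} Id_{S''} *)
  (theta1 theta2 : AS2 -> BS2)
  (Htheta1 : slinear (kid S2) theta1 /\ forall x, theta1 (eA1 x) = eB1 (theta x))
  (Htheta2 : slinear (kid S2) theta2 /\ forall x, theta2 (eA2 x) = eB2 (theta x))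
  (* the cocycle u = theta_2^-1 o theta_1 *)
  (u : ahom (kid S2) AS2 AS2) (Hu : forall x, theta2 (u x) = theta1 x)
  (* the functor *)
  (F : kfunctor k) (HF : stable_bc F)
  (* F_R(A) (x)_R S, F_R(B) (x)_R S, F_R(A) (x)_R S'' *)
  (FAS : lmodType S) (jA : FO F A -> FAS) (HjA : mod_bc alpha jA)
  (FBS : lmodType S) (jB : FO F B -> FBS) (HjB : mod_bc alpha jB)
  (FAS2 : lmodType S2) (jA2 : FO F A -> FAS2) (HjA2 : mod_bc (kcomp alpha alpha1) jA2)
  (* nu_{A, alpha_i o alpha} (the same map for i = 1, 2) *)
  (nu : FAS2 -> FO F AS2)
  (Hnu : slinear (kid S2) nu /\ forall m, nu (jA2 m) = FM F iAS2 m)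
  (* the cocycle z = nu^-1 o F(u) o nu *)
  (z : FAS2 -> FAS2) (Hz : forall y, nu (z y) = FM F u (nu y))
  (* Id_{F_R(A)} (x) alpha_i : F_R(A) (x)_R S -> F_R(A) (x)_R S'' *)
  (d1 d2 : FAS -> FAS2)
  (Hd1 : slinear alpha1 d1 /\ forall m, d1 (jA m) = jA2 m)
  (Hd2 : slinear alpha2 d2 /\ forall m, d2 (jA m) = jA2 m) :
  (* F_R(B) is an S/R-form of F_R(A) *)
  (exists g : FAS -> FBS, slinear (kid S) g /\ bijective g) /\
  (* F_R(B) is R-isomorphic to L_z = {x | z((Id (x) alpha_1) x) = (Id (x) alpha_2) x} *)
  (exists f : FO F B -> FAS,
     [/\ slinear alpha f, injective f &
         forall x, z (d1 x) = d2 x <-> exists m, f m = x]).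
Proof.
have hcomm : forall r, alpha1 (alpha r) = alpha2 (alpha r) := HS2.1.
have mEA1 : forall x y, eA1 (amul x y) = amul (eA1 x) (eA1 y).
  apply: (mul_ext HAS HeA1.1) => x y.
  by rewrite -(afun_mul iAS) !HeA1.2 (afun_mul iAS2).
have mEA2 : forall x y, eA2 (amul x y) = amul (eA2 x) (eA2 y).
  apply: (mul_ext HAS HeA2.1) => x y.
  by rewrite -(afun_mul iAS) !HeA2.2 (afun_mul iAS2).
have mEB1 : forall x y, eB1 (amul x y) = amul (eB1 x) (eB1 y).
  apply: (mul_ext HBS HeB1.1) => x y.
  by rewrite -(afun_mul iBS) !HeB1.2 (afun_mul iBS2).
have mEB2 : forall x y, eB2 (amul x y) = amul (eB2 x) (eB2 y).
  apply: (mul_ext HBS HeB2.1) => x y.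
  by rewrite -(afun_mul iBS) !HeB2.2 (afun_mul iBS2).
pose EA1 := AHom HeA1.1 mEA1.
pose EA2 := AHom HeA2.1 mEA2.
pose EB1 := AHom HeB1.1 mEB1.
pose EB2 := AHom HeB2.1 mEB2.
case: Htheta => ti tK tiK.
have tiL : slinear (kid S) ti := inv_slin (afun_slin theta) tK tiK.
have mti : forall x y, ti (amul x y) = amul (ti x) (ti y).
  by move=> x y; apply: (can_inj tK); rewrite (afun_mul theta) !tiK.
pose Thi := AHom tiL mti.
have mT1 : forall x y, theta1 (amul x y) = amul (theta1 x) (theta1 y).
  apply: (mul_ext HAS2 Htheta1.1) => x y.
  rewrite -(afun_mul iAS2) -!HeA1.2 !Htheta1.2.
  by rewrite (afun_mul iAS) (afun_mul theta) mEB1.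
have mT2 : forall x y, theta2 (amul x y) = amul (theta2 x) (theta2 y).
  apply: (mul_ext HAS2 Htheta2.1) => x y.
  rewrite -(afun_mul iAS2) -!HeA2.2 !Htheta2.2.
  by rewrite (afun_mul iAS) (afun_mul theta) mEB2.
pose Th1 := AHom Htheta1.1 mT1.
pose Th2 := AHom Htheta2.1 mT2.
have gl : slinear (kcomp alpha alpha1) (fun b => eA2 (ti (iBS b))).
  split => [b b'|r b]; first by rewrite (slinD (afun_slin iBS)) (slinD tiL) (slinD HeA2.1).
  by rewrite (slinZ (afun_slin iBS)) (slinZ tiL) (slinZ HeA2.1) /= hcomm.
case: (bc_map HBS2 gl) => t2i [t2iL t2iE].
have t2iB : forall y, t2i (eB2 y) = eA2 (ti y).
  apply: (bc_ext (phi := alpha2) HBS).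
  - exact: (slin_comp HeB2.1 t2iL).
  - exact: (slin_comp tiL HeA2.1).
  - by move=> b; rewrite HeB2.2 t2iE.
have t2K : forall x, t2i (theta2 x) = x.
  apply: (bc_ext (phi := kid S2) HAS2).
  - exact: (slin_comp Htheta2.1 t2iL).
  - by split.
  - by move=> a; rewrite -HeA2.2 Htheta2.2 t2iB tK.
have mt2i : forall x y, t2i (amul x y) = amul (t2i x) (t2i y).
  apply: (mul_ext HBS2 t2iL) => x y.
  by rewrite -(afun_mul iBS2) !t2iE (afun_mul iBS) mti mEA2.
pose Th2i := AHom t2iL mt2i.
have FT2inj : injective (FM F Th2).
  move=> m m' e.
  have h : forall m, FM F Th2i (FM F Th2 m) = m.
    move=> m0.
    have c1 : forall x, aid AS2 x = Th2i (Th2 x) by move=> x /=; rewrite t2K.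
    rewrite -(@FM_comp _ F _ _ _ _ _ _ _ _ _ Th2 Th2i (aid AS2) (fun r => erefl) c1).
    exact: (@FM_id _ F _ _ _ (aid AS2) (fun r => erefl) (fun x => erefl)).
  by rewrite -(h m) e h.
case: (bc_map HjA (FM_slin F iAS)) => vA [vAL vAE].
have vAb : bijective vA := HF _ _ _ _ _ iAS HAS _ jA HjA vA vAL vAE.
case: (bc_map HjB (FM_slin F iBS)) => vB [vBL vBE].
have vBb : bijective vB := HF _ _ _ _ _ iBS HBS _ jB HjB vB vBL vBE.
pose FBS2 := Tens (kcomp alpha alpha1) (FO F B).
pose jB2 := @jT _ _ _ (kcomp alpha alpha1) (FO F B).
have HjB2 : mod_bc (kcomp alpha alpha1) jB2 := Tens_bc _ _.
case: (bc_map HjB2 (FM_slin F iBS2)) => vB2 [vB2L vB2E].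
have vB2b : bijective vB2 := HF _ _ _ _ _ iBS2 HBS2 _ jB2 HjB2 vB2 vB2L vB2E.
have nub : bijective nu := HF _ _ _ _ _ iAS2 HAS2 _ jA2 HjA2 nu Hnu.1 Hnu.2.
case: vAb => vAi vAK vAiK.
case: vBb => vBi vBK vBiK.
have vAiL := inv_slin vAL vAK vAiK.
have vBiL := inv_slin vBL vBK vBiK.
have FTK : forall w, FM F Thi (FM F theta w) = w.
  move=> w.
  have c1 : forall x, aid AS x = Thi (theta x) by move=> x /=; rewrite tK.
  rewrite -(@FM_comp _ F _ _ _ _ _ _ _ _ _ theta Thi (aid AS) (fun r => erefl) c1).
  exact: (@FM_id _ F _ _ _ (aid AS) (fun r => erefl) (fun x => erefl)).
have FTiK : forall w, FM F theta (FM F Thi w) = w.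
  move=> w.
  have c1 : forall x, aid BS x = theta (Thi x) by move=> x /=; rewrite tiK.
  rewrite -(@FM_comp _ F _ _ _ _ _ _ _ _ _ Thi theta (aid BS) (fun r => erefl) c1).
  exact: (@FM_id _ F _ _ _ (aid BS) (fun r => erefl) (fun x => erefl)).
pose Phi := fun x => vBi (FM F theta (vA x)).
pose Phii := fun y => vAi (FM F Thi (vB y)).
have PhiK : cancel Phi Phii by move=> x; rewrite /Phi /Phii vBiK FTK vAK.
have PhiiK : cancel Phii Phi by move=> y; rewrite /Phi /Phii vAiK FTiK vBK.
have PhiL : slinear (kid S) Phi.
  exact: (slin_comp (slin_comp vAL (FM_slin F theta) (fun r => erefl)) vBiL (fun r => erefl)).
have PhiiL : slinear (kid S) Phii := inv_slin PhiL PhiK PhiiK.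
split; first by exists Phi; split => //; exists Phii.
have hjB2 := jT_slin (kcomp alpha alpha1) (FO F B).
have g1 : slinear alpha (fun n => (jB2 n : restr alpha1 FBS2)).
  split => [n n'|r n]; first exact: (slinD hjB2).
  exact: (slinZ hjB2).
case: (bc_map HjB g1) => e1B [e1BL e1BE].
have g2 : slinear alpha (fun n => (jB2 n : restr alpha2 FBS2)).
  split => [n n'|r n]; first exact: (slinD hjB2).
  by rewrite /jB2 (slinZ hjB2) restrZ /= hcomm.
case: (bc_map HjB g2) => e2B [e2BL e2BE].
have He1 : slinear alpha1 (fun y => (e1B y : FBS2)) /\ forall n, e1B (jB n) = jB2 n.
  by split.
have He2 : slinear alpha2 (fun y => (e2B y : FBS2)) /\ forall n, e2B (jB n) = jB2 n.
  by split.
have I1 : forall x, FM F EA1 (vA x) = nu (d1 x).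
  apply: (bc_ext (phi := alpha1) HjA).
  - exact: (slin_comp vAL (FM_slin F EA1) (fun r => erefl)).
  - exact: (slin_comp Hd1.1 Hnu.1 (fun r => erefl)).
  - move=> m; rewrite vAE Hd1.2 Hnu.2; symmetry.
    exact: (@FM_comp _ F _ _ _ _ _ _ _ _ _ iAS EA1 iAS2 (fun r => erefl) (fun a => esym (HeA1.2 a))).
have I2 : forall x, FM F EA2 (vA x) = nu (d2 x).
  apply: (bc_ext (phi := alpha2) HjA).
  - exact: (slin_comp vAL (FM_slin F EA2) (fun r => erefl)).
  - exact: (slin_comp Hd2.1 Hnu.1 (fun r => erefl)).
  - move=> m; rewrite vAE Hd2.2 Hnu.2; symmetry.
    exact: (@FM_comp _ F _ _ _ _ _ _ _ _ _ iAS EA2 iAS2 hcomm (fun a => esym (HeA2.2 a))).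
have I3 : forall y, vB2 (e1B y) = FM F EB1 (vB y).
  apply: (bc_ext (phi := alpha1) HjB).
  - exact: (slin_comp He1.1 vB2L (fun r => erefl)).
  - exact: (slin_comp vBL (FM_slin F EB1) (fun r => erefl)).
  - move=> m; rewrite e1BE vB2E vBE.
    exact: (@FM_comp _ F _ _ _ _ _ _ _ _ _ iBS EB1 iBS2 (fun r => erefl) (fun a => esym (HeB1.2 a))).
have I4 : forall y, vB2 (e2B y) = FM F EB2 (vB y).
  apply: (bc_ext (phi := alpha2) HjB).
  - exact: (slin_comp He2.1 vB2L (fun r => erefl)).
  - exact: (slin_comp vBL (FM_slin F EB2) (fun r => erefl)).
  - move=> m; rewrite e2BE vB2E vBE.
    exact: (@FM_comp _ F _ _ _ _ _ _ _ _ _ iBS EB2 iBS2 hcomm (fun a => esym (HeB2.2 a))).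
have I5 : forall w, FM F EB1 (FM F theta w) = FM F Th1 (FM F EA1 w).
  move=> w; pose H := acomp theta EB1.
  rewrite -(@FM_comp _ F _ _ _ _ _ _ _ _ _ theta EB1 H (fun r => erefl) (fun x => erefl)).
  exact: (@FM_comp _ F _ _ _ _ _ _ _ _ _ EA1 Th1 H (fun r => erefl) (fun x => esym (Htheta1.2 x))).
have I5' : forall w, FM F EB2 (FM F theta w) = FM F Th2 (FM F EA2 w).
  move=> w; pose H := acomp theta EB2.
  rewrite -(@FM_comp _ F _ _ _ _ _ _ _ _ _ theta EB2 H (fun r => erefl) (fun x => erefl)).
  exact: (@FM_comp _ F _ _ _ _ _ _ _ _ _ EA2 Th2 H (fun r => erefl) (fun x => esym (Htheta2.2 x))).
have I6 : forall w, FM F Th2 (FM F u w) = FM F Th1 w.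
  move=> w; symmetry.
  exact: (@FM_comp _ F _ _ _ _ _ _ _ _ _ u Th2 Th1 (fun r => erefl) (fun x => esym (Hu x))).
have E1 : forall x, vB2 (e1B (Phi x)) = FM F Th2 (nu (z (d1 x))).
  by move=> x; rewrite I3 /Phi vBiK I5 I1 -I6 Hz.
have E2 : forall x, vB2 (e2B (Phi x)) = FM F Th2 (nu (d2 x)).
  by move=> x; rewrite I4 /Phi vBiK I5' I2.
exists (fun m => Phii (jB m)); split.
- exact: (slin_comp HjB.1 PhiiL (fun r => erefl)).
- by move=> m m' /(can_inj PhiiK) /(desc_inj Hff HjB).
- move=> x; split.
  + move=> hz.
    have he : (e1B (Phi x) : FBS2) = (e2B (Phi x) : FBS2).
      by apply: (bij_inj vB2b); rewrite E1 E2 hz.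
    case: (desc_eq HS2 Hff HjB HjB2 He1 He2 he) => m hm.
    by exists m; rewrite hm PhiK.
  + case=> m <-.
    apply: (bij_inj nub); apply: FT2inj.
    by rewrite -E1 -E2 PhiiK e1BE e2BE.
Qed.
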